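(* Let $\Delta$ be a finite, flag, simply connected simplicial complex, with $\mathcal{P}_H$, $q$, $T$, $p_n$, $L$ and $\Phi_n$ as in the context, and let $K$ be a constant such that $\mathrm{Area}_{\mathcal{P}_H}\big(p_n(q,\iota e)\,e^n\,p_n(\tau e,q)\big)\le K|n|^2$ for all $e\in\mathrm{Edge}(\Delta)$ and $n\in\mathbb{Z}$. Let $e\cdot f\cdot g$ be a combinatorial 1-cycle in $\Delta$. Then for every $n\in\mathbb{Z}$, $\mathrm{Area}_{\mathcal{P}_H}\big(\Phi_n(e^{-1}f^{-1}g^{-1})\big)\le(3K+4)|n|^2+(6L+6)|n|+5$.
   Context: $\mathrm{Edge}(\Delta)$ is the set of directed edges of $\Delta$; for $e$ in it, $\iota e$, $\tau e$ are its initial and terminal vertices and $\overline{e}$ is the reversed edge. $e_1\cdot\ldots\cdot e_l$ is a combinatorial path if $\tau e_i=\iota e_{i+1}$, and a combinatorial 1-cycle if also $\tau e_l=\iota e_1$. $\mathcal{P}_H=\langle\mathrm{Edge}(\Delta)\mid\mathcal{R}_H\rangle$ where $\mathcal{R}_H$ consists of the words $e\overline{e}$ ($e\in\mathrm{Edge}(\Delta)$) and $efg$, $e^{-1}f^{-1}g^{-1}$ for every combinatorial 1-cycle $e\cdot f\cdot g$. $\mathrm{Area}_{\mathcal{P}_H}(w)$ is the least $m$ such that $w$ is freely equal to $\prod_{i=1}^m x_ir_ix_i^{-1}$ with $r_i\in\mathcal{R}_H^{\pm1}$. For a letter $e$ and $k\in\mathbb{Z}$, $e^k$ is the word of $k$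 copies of $e$ if $k\ge0$ and $|k|$ copies of $e^{-1}$ if $k<0$. Fix a vertex $q$ and a spanning tree $T$ of the 1-skeleton of $\Delta$; $p_n(u,v)=e_1^n\cdots e_l^n$ where $e_1\cdot\ldots\cdot e_l$ is the unique geodesic combinatorial path in $T$ from $u$ to $v$. $L$ is the maximum over vertices $u,v$ of their edge-path distance in $T$. $\Phi_n$ ($n\in\mathbb{Z}$) is the endomorphism of the free monoid on $\mathrm{Edge}(\Delta)^{\pm1}$ with $\Phi_n(e)=p_n(q,\iota e)\,e^{n+1}\,p_n(\tau e,q)$ and $\Phi_n(e^{-1})=\Phi_n(e)^{-1}$ (formal inverse word). *)

(* Defs.v *)
From HB Require Import structures.
From mathcomp Require Import all_boot all_order all_algebra.
From Stdlib Require Import Relations.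
Set Implicit Arguments. Unset Strict Implicit. Unset Printing Implicit Defensive.
Import Order.TTheory GRing.Theory Num.Theory.

(* A finite flag simplicial complex Delta is the clique complex of its
   1-skeleton, a finite simple graph (V, adj): adj symmetric, irreflexive.
   Its simplices are the cliques of adj. *)

Section Complex.
Variables (V : finType) (adj : rel V).

Definition Edge := {p : V * V | adj p.1 p.2}.
Definition iota_e (e : Edge) : V := (val e).1.
Definition tau_e (e : Edge) : V := (val e).2.

Definition cycle3 (e f g : Edge) : Prop :=
  [/\ tau_e e = iota_e f, tau_e f = iota_e g & tau_e g = iota_e e].

Inductive ep_move : seq V -> seq V -> Prop :=
| ep_back (p r : seq V) (a b : V) :
    adj a b -> ep_move (p ++ [:: a; b; a] ++ r) (p ++ [:: a] ++ r)
| ep_tri (p r : seq V) (a b c : V) :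
    adj a b -> adj b c -> adj a c ->
    ep_move (p ++ [:: a; b; c] ++ r) (p ++ [:: a; c] ++ r).

Definition ep_equiv := clos_refl_sym_trans (seq V) ep_move.

Definition simply_connected : Prop :=
  (forall u v : V, connect adj u v) /\
  (forall (v : V) (s : seq V), path adj v s -> last v s = v ->
     ep_equiv (v :: s) [:: v]).

Definition acyclic (T : rel V) : Prop :=
  forall (v : V) (s : seq V),
    path T v s -> uniq (v :: s) -> 2 <= size s -> ~~ T (last v s) v.

Definition spanning_tree (T : rel V) : Prop :=
  [/\ (forall u v : V, T u v -> adj u v), (forall u v : V, T u v = T v u), (forall u v : V, connect T u v) & acyclic T].

Fixpoint cpath (u : V) (es : seq Edge) (v : V) : bool :=
  match es with
  | [::] => u == v
  | e :: es' => (iota_e e == u) && cpath (tau_e e) es' v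
  end.

Definition cpath_in (T : rel V) (u : V) (es : seq Edge) (v : V) : bool :=
  cpath u es v && all (fun e => T (iota_e e) (tau_e e)) es.

Definition tree_geodesics (T : rel V) (gp : V -> V -> seq Edge) : Prop :=
  forall u v : V, cpath_in T u (gp u v) v /\
    (forall es, cpath_in T u es v -> size (gp u v) <= size es).

Definition Tdiam (gp : V -> V -> seq Edge) : nat :=
  \max_(u : V) \max_(v : V) size (gp u v).

(* a letter (e, false) is e, (e, true) is e^{-1} *)
Definition word := seq (Edge * bool).
Definition winv (w : word) : word := rev (map (fun x => (x.1, ~~ x.2)) w).

Inductive free_step : word -> word -> Prop :=
| fs_cancel (w1 w2 : word) (e : Edge) (b : bool) :
    free_step (w1 ++ [:: (e, b); (e, ~~ b)] ++ w2) (w1 ++ w2).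

Definition freely_eq := clos_refl_sym_trans word free_step.

Definition relator (r : word) : Prop :=
  (exists e f : Edge, val f = ((val e).2, (val e).1) /\
      r = [:: (e, false); (f, false)]) \/
  (exists e f g : Edge, cycle3 e f g /\
      (r = [:: (e, false); (f, false); (g, false)] \/
       r = [:: (e, true); (f, true); (g, true)])).

Definition relator_pm (r : word) : Prop := relator r \/ relator (winv r).

Definition area_rep (w : word) (m : nat) : Prop :=
  exists xs : seq (word * word),
    [/\ size xs = m, (forall xr, xr \in xs -> relator_pm xr.2) &
        freely_eq w (flatten [seq xr.1 ++ xr.2 ++ winv xr.1 | xr <- xs])].

(* Area_{P_H}(w) <= B  (Area = least such m; +oo if none exists) *)
Definition Area_le (R : realFieldType) (w : word) (B : R) : Prop :=
  exists m : nat, area_rep w m /\ (m%:R <= B)%R.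

Definition lpow (e : Edge) (k : int) : word :=
  match k with
  | Posz m => nseq m (e, false)
  | Negz m => nseq m.+1 (e, true)
  end.

Definition pn_of (es : seq Edge) (n : int) : word :=
  flatten [seq lpow e n | e <- es].

Definition Phi_edge (gp : V -> V -> seq Edge) (q : V) (n : int) (e : Edge) : word :=
  pn_of (gp q (iota_e e)) n ++ lpow e (n + 1)%R ++ pn_of (gp (tau_e e) q) n.

Definition Phi_letter gp q n (x : Edge * bool) : word :=
  if x.2 then winv (Phi_edge gp q n x.1) else Phi_edge gp q n x.1.

Definition Phi gp q n (w : word) : word := flatten [seq Phi_letter gp q n x | x <- w].

End Complex.

(* Main.v *)
Require Import Defs.
From HB Require Import structures.
From mathcomp Require Import all_boot all_order all_algebra.
From Stdlib Require Import Relations.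
From mathcomp Require Import zify.
Import Order.TTheory GRing.Theory Num.Theory.
Set Implicit Arguments. Unset Strict Implicit. Unset Printing Implicit Defensive.


Definition linv {V : finType} {adj : rel V} (x : Edge adj * bool) : Edge adj * bool := (x.1, ~~ x.2).

Lemma winv_cat {V : finType} {adj : rel V} (a b : word adj) : winv (a ++ b) = winv b ++ winv a.
Proof. by rewrite /winv map_cat rev_cat. Qed.

Lemma winvK {V : finType} {adj : rel V} (a : word adj) : winv (winv a) = a.
Proof. by rewrite /winv map_rev revK -map_comp map_id_in // => [[x b]] _ /=; rewrite negbK. Qed.

Lemma winv1 {V : finType} {adj : rel V} (x : Edge adj * bool) : winv [:: x] = [:: linv x].
Proof. by []. Qed.

Lemma winv_nseq {V : finType} {adj : rel V} k (x : Edge adj * bool) : winv (nseq k x) = nseq k (linv x).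
Proof. by rewrite /winv map_nseq rev_nseq. Qed.

Lemma fe_refl {V : finType} {adj : rel V} (a : word adj) : freely_eq a a.
Proof. exact: rst_refl. Qed.
Lemma fe_sym {V : finType} {adj : rel V} (a b : word adj) : freely_eq a b -> freely_eq b a.
Proof. exact: rst_sym. Qed.
Lemma fe_trans {V : finType} {adj : rel V} (a b c : word adj) : freely_eq a b -> freely_eq b c -> freely_eq a c.
Proof. exact: rst_trans. Qed.

Lemma fs_ctx {V : finType} {adj : rel V} (x y a b : word adj) :
  free_step a b -> free_step (x ++ a ++ y) (x ++ b ++ y).
Proof.
case=> w1 w2 e bb.
have -> : x ++ (w1 ++ [:: (e, bb); (e, ~~ bb)] ++ w2) ++ y = (x ++ w1) ++ [:: (e, bb); (e, ~~ bb)] ++ (w2 ++ y).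
  by rewrite !catA.
move: (fs_cancel (x ++ w1) (w2 ++ y) e bb); by rewrite -!catA.
Qed.

Lemma fe_ctx {V : finType} {adj : rel V} (x y a b : word adj) :
  freely_eq a b -> freely_eq (x ++ a ++ y) (x ++ b ++ y).
Proof.
elim=> [u v H|u|u v _ IH|u v w _ IH1 _ IH2].
- by apply: rst_step; apply: fs_ctx.
- exact: rst_refl.
- exact: rst_sym.
- exact: rst_trans IH2.
Qed.

Lemma fe_cat {V : finType} {adj : rel V} (a b c d : word adj) :
  freely_eq a b -> freely_eq c d -> freely_eq (a ++ c) (b ++ d).
Proof.
move=> H1 H2; apply: (@fe_trans _ _ _ (b ++ c)).
  by have := fe_ctx [::] c H1; rewrite /= => H.
by have := fe_ctx b [::] H2; rewrite !cats0.
Qed.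

Lemma fe_cancel1 {V : finType} {adj : rel V} (x : Edge adj * bool) : freely_eq [:: x; linv x] [::].
Proof. case: x => e b; rewrite /freely_eq; apply: rst_step; exact: (fs_cancel [::] [::] e b). Qed.

Lemma fe_cancel {V : finType} {adj : rel V} (a : word adj) : freely_eq (a ++ winv a) [::].
Proof.
elim: a => [|x a IH] /=; first exact: fe_refl.
have -> : winv (x :: a) = winv a ++ [:: linv x] by rewrite -cat1s winv_cat.
apply: fe_trans (fe_cancel1 x).
have := fe_ctx [:: x] [:: linv x] IH; by rewrite /= catA.
Qed.

Lemma fe_cancel' {V : finType} {adj : rel V} (a : word adj) : freely_eq (winv a ++ a) [::].
Proof. by have := fe_cancel (winv a); rewrite winvK. Qed.

Lemma fs_winv {V : finType} {adj : rel V} (a b : word adj) : free_step a b -> free_step (winv a) (winv b).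
Proof.
case=> w1 w2 e bb; rewrite !winv_cat.
have -> : winv [:: (e, bb); (e, ~~ bb)] = [:: (e, bb); (e, ~~ bb)] by rewrite /winv /= negbK.
move: (fs_cancel (winv w2) (winv w1) e bb); by rewrite -!catA.
Qed.

Lemma fe_winv {V : finType} {adj : rel V} (a b : word adj) : freely_eq a b -> freely_eq (winv a) (winv b).
Proof.
elim=> [u v H|u|u v _ IH|u v w _ IH1 _ IH2].
- by apply: rst_step; apply: fs_winv.
- exact: rst_refl.
- exact: rst_sym.
- exact: rst_trans IH2.
Qed.

Definition cflat {V : finType} {adj : rel V} (xs : seq (word adj * word adj)) : word adj :=
  flatten [seq xr.1 ++ xr.2 ++ winv xr.1 | xr <- xs].

Lemma area_cat {V : finType} {adj : rel V} (a b : word adj) m1 m2 :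
  area_rep a m1 -> area_rep b m2 -> area_rep (a ++ b) (m1 + m2).
Proof.
move=> [xs [s1 r1 f1]] [ys [s2 r2 f2]]; exists (xs ++ ys); split.
- by rewrite size_cat s1 s2.
- by move=> xr; rewrite mem_cat => /orP [] ?; [apply: r1|apply: r2].
- by rewrite map_cat flatten_cat; apply: fe_cat.
Qed.

Lemma cflat_conj {V : finType} {adj : rel V} (x : word adj) xs :
  freely_eq (x ++ cflat xs ++ winv x) (cflat [seq (x ++ xr.1, xr.2) | xr <- xs]).
Proof.
elim: xs => [|[p r] xs IH] /=.
  by rewrite /cflat /=; apply: fe_cancel.
rewrite /cflat /= -/(cflat xs) -/(cflat _).
rewrite winv_cat.
apply: (@fe_trans _ _ _ ((x ++ p ++ r ++ winv p ++ winv x) ++ (x ++ cflat xs ++ winv x))).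
  have := fe_ctx (x ++ p ++ r ++ winv p) (cflat xs ++ winv x) (fe_sym (fe_cancel' x)).
  by rewrite /= !catA.
apply: fe_cat; last exact: IH.
rewrite -catA; exact: fe_refl.
Qed.

Lemma area_conj {V : finType} {adj : rel V} (x a : word adj) m :
  area_rep a m -> area_rep (x ++ a ++ winv x) m.
Proof.
move=> [xs [s1 r1 f1]]; exists [seq (x ++ xr.1, xr.2) | xr <- xs]; split.
- by rewrite size_map.
- by move=> xr /mapP [yr /r1 H ->].
- apply: fe_trans (cflat_conj x xs).
  by apply: fe_cat; [exact: fe_refl| apply: fe_cat; [exact: f1|exact: fe_refl]].
Qed.

Lemma relator_pm_winv {V : finType} {adj : rel V} (r : word adj) : relator_pm r -> relator_pm (winv r).
Proof. by case=> H; [right; rewrite winvK | left]. Qed.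

Lemma cflat_inv {V : finType} {adj : rel V} xs :
  winv (cflat xs) = cflat (rev [seq (xr.1, winv xr.2) | xr <- xs]) :> word adj.
Proof.
elim: xs => [|[p r] xs IH] //=.
rewrite /cflat /= -/(cflat xs) winv_cat IH rev_cons -cats1 map_cat flatten_cat /= cats0.
by rewrite !winv_cat winvK !catA.
Qed.

Lemma area_inv {V : finType} {adj : rel V} (a : word adj) m :
  area_rep a m -> area_rep (winv a) m.
Proof.
move=> [xs [s1 r1 f1]]; exists (rev [seq (xr.1, winv xr.2) | xr <- xs]); split.
- by rewrite size_rev size_map.
- move=> xr; rewrite mem_rev => /mapP [yr /r1 H ->] /=; exact: relator_pm_winv.
- by have := fe_winv f1; rewrite -[flatten _]/(cflat xs) cflat_inv.
Qed.

Lemma area_free {V : finType} {adj : rel V} (a b : word adj) m :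
  freely_eq a b -> area_rep a m -> area_rep b m.
Proof. by move=> H [xs [s1 r1 f1]]; exists xs; split => //; apply: fe_trans f1; apply: fe_sym. Qed.

Definition cv {V : finType} {adj : rel V} (w w' : word adj) (c : nat) :=
  exists m, (m <= c)%N /\ area_rep (w ++ winv w') m.

Lemma cv_free {V : finType} {adj : rel V} (w w' : word adj) : freely_eq w w' -> cv w w' 0.
Proof.
move=> H; exists 0%N; split => //; exists [::]; split => //.
apply: fe_trans (fe_cancel w'); apply: fe_cat => //; exact: fe_refl.
Qed.

Lemma cv_refl {V : finType} {adj : rel V} (w : word adj) : cv w w 0.
Proof. apply: cv_free; exact: fe_refl. Qed.

Lemma cv_mono {V : finType} {adj : rel V} (w w' : word adj) c c' : cv w w' c -> (c <= c')%N -> cv w w' c'.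
Proof. by move=> [m [Hm H]] Hc; exists m; split => //; apply: leq_trans Hc. Qed.

Lemma cv_trans {V : finType} {adj : rel V} (a b d : word adj) c1 c2 :
  cv a b c1 -> cv b d c2 -> cv a d (c1 + c2).
Proof.
move=> [m1 [H1 A1]] [m2 [H2 A2]]; exists (m1 + m2)%N; split; first by rewrite leq_add.
apply: area_free (area_cat A1 A2).
have := fe_ctx a (winv d) (fe_cancel' b); rewrite /= => H.
by have := H; rewrite !catA.
Qed.

Lemma cv_sym {V : finType} {adj : rel V} (a b : word adj) c : cv a b c -> cv b a c.
Proof. by move=> [m [H A]]; exists m; split => //; have := area_inv A; rewrite winv_cat winvK. Qed.

Lemma cv_ctx {V : finType} {adj : rel V} (x y a b : word adj) c :
  cv a b c -> cv (x ++ a ++ y) (x ++ b ++ y) c.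
Proof.
move=> [m [H A]]; exists m; split => //.
apply: area_free (area_conj x A).
rewrite !winv_cat.
have := fe_ctx (x ++ a) (winv b ++ winv x) (fe_sym (fe_cancel y)).
by rewrite /= !catA.
Qed.

Lemma cv_rel {V : finType} {adj : rel V} (a b : word adj) : relator_pm (a ++ winv b) -> cv a b 1.
Proof.
move=> H; exists 1%N; split => //; exists [:: ([::], a ++ winv b)]; split => //.
- by move=> xr; rewrite inE => /eqP -> /=.
- by rewrite /= !cats0; exact: fe_refl.
Qed.

Lemma cv_relator {V : finType} {adj : rel V} (a b : word adj) : relator (a ++ winv b) -> cv a b 1.
Proof. by move=> H; apply: cv_rel; left. Qed.

Lemma cv_relator' {V : finType} {adj : rel V} (a b : word adj) : relator (winv (a ++ winv b)) -> cv a b 1.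
Proof. by move=> H; apply: cv_rel; right. Qed.

Lemma cv_area {V : finType} {adj : rel V} (w : word adj) c : cv w [::] c -> exists m, (m <= c)%N /\ area_rep w m.
Proof. by move=> [m [H A]]; exists m; split => //; move: A; rewrite cats0. Qed.

Lemma area_cv {V : finType} {adj : rel V} (w : word adj) m : area_rep w m -> cv w [::] m.
Proof. by move=> A; exists m; split => //; rewrite cats0. Qed.

Lemma cv_transl {V : finType} {adj : rel V} (a b d : word adj) c1 c2 c :
  cv a b c1 -> cv b d c2 -> (c1 + c2 <= c)%N -> cv a d c.
Proof. by move=> H1 H2 Hc; apply: cv_mono (cv_trans H1 H2) Hc. Qed.

Lemma cv_catl {V : finType} {adj : rel V} (x a b : word adj) c : cv a b c -> cv (x ++ a) (x ++ b) c.
Proof. by move=> H; have := cv_ctx x [::] H; rewrite !cats0. Qed.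

Lemma cv_catr {V : finType} {adj : rel V} (y a b : word adj) c : cv a b c -> cv (a ++ y) (b ++ y) c.
Proof. by move=> H; have := cv_ctx [::] y H. Qed.

Lemma lpowE {V : finType} {adj : rel V} (a : Edge adj) (i : int) :
  lpow a i = nseq `|i|%N (a, (i < 0)%R).
Proof. by case: i. Qed.

Lemma nseqSr {T : Type} k (x : T) : nseq k.+1 x = nseq k x ++ [:: x].
Proof. by elim: k => //= k <-. Qed.

Lemma swap1 {V : finType} {adj : rel V} (x y : Edge adj * bool) c j :
  cv [:: x; y] [:: y; x] c -> cv ([:: x] ++ nseq j y) (nseq j y ++ [:: x]) (j * c).
Proof.
move=> H; elim: j => [|j IH]; first exact: cv_refl.
rewrite /= mulSn.
apply: (cv_trans (b := y :: x :: nseq j y)).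
  by have := cv_ctx [::] (nseq j y) H.
by have := cv_catl [:: y] IH.
Qed.

Lemma swap_nseq {V : finType} {adj : rel V} (x y : Edge adj * bool) c i j :
  cv [:: x; y] [:: y; x] c -> cv (nseq i x ++ nseq j y) (nseq j y ++ nseq i x) (i * j * c).
Proof.
move=> H; elim: i => [|i IH]; first by rewrite /= cats0; exact: cv_refl.
apply: (cv_transl (b := x :: (nseq j y ++ nseq i x)) (c1 := (i * j * c)%N) (c2 := (j * c)%N)).
- by have := cv_catl [:: x] IH.
- by have := cv_catr (nseq i x) (swap1 j H); rewrite -!catA.
- rewrite mulSn mulnDl; lia.
Qed.

Definition commE {V : finType} {adj : rel V} (a b : Edge adj) :=
  forall s t, cv [:: (a, s); (b, t)] [:: (b, t); (a, s)] 2.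

Lemma commE_sym {V : finType} {adj : rel V} (a b : Edge adj) : commE a b -> commE b a.
Proof. by move=> H s t; apply: cv_sym. Qed.

Lemma swap_lpow {V : finType} {adj : rel V} (a b : Edge adj) i j :
  commE a b -> cv (lpow a i ++ lpow b j) (lpow b j ++ lpow a i) (`|i| * `|j| * 2)%N.
Proof. by move=> H; rewrite !lpowE; apply: swap_nseq. Qed.

Lemma pairpow_nat {V : finType} {adj : rel V} (x y z : Edge adj * bool) k :
  cv [:: x; y] [:: z] 1 -> cv [:: z; y] [:: y; z] 2 ->
  cv (nseq k x ++ nseq k y) (nseq k z) (k * k).
Proof.
move=> H1 H2; elim: k => [|k IH]; first exact: cv_refl.
have E : nseq k.+1 x ++ nseq k.+1 y = [:: x] ++ (nseq k x ++ nseq k y) ++ [:: y].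
  by rewrite [nseq k.+1 y]nseqSr /= -catA.
rewrite E.
apply: (cv_transl (b := [:: x] ++ nseq k z ++ [:: y]) (c2 := (k * 2 + 1)%N)); first exact: cv_ctx IH.
  2: lia.
apply: (cv_transl (b := [:: x] ++ [:: y] ++ nseq k z)).
- apply: cv_catl; apply: cv_sym.
  exact: swap1 k (cv_sym H2).
- exact: (cv_catr (nseq k z) H1).
- lia.
Qed.

Lemma pairpow {V : finType} {adj : rel V} (a b c : Edge adj) k :
  (forall s, cv [:: (a, s); (b, s)] [:: (c, ~~ s)] 1) -> commE c b ->
  cv (lpow a k ++ lpow b k) (winv (lpow c k)) (`|k| * `|k|)%N.
Proof. by move=> H Hc; rewrite !lpowE winv_nseq; apply: pairpow_nat; [apply: H| apply: Hc]. Qed.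

Lemma lpow_opp {V : finType} {adj : rel V} (a : Edge adj) i : lpow a (- i)%R = winv (lpow a i).
Proof. by case: i => [[|k]|k] //; rewrite winv_nseq. Qed.

Lemma lpowS {V : finType} {adj : rel V} (a : Edge adj) i :
  freely_eq (lpow a (i + 1)%R) ((a, false) :: lpow a i).
Proof.
case: i => k.
  have -> : (Posz k + 1 = Posz k.+1)%R by rewrite -addn1.
  exact: fe_refl.
have -> : (Negz k + 1 = - Posz k)%R by rewrite NegzE; lia.
rewrite lpow_opp /= winv_nseq /=.
apply: fe_sym; have := fe_ctx [::] (nseq k (a, true)) (fe_cancel1 (a, false)).
by [].
Qed.

Lemma nseq_cv {V : finType} {adj : rel V} (x y : Edge adj * bool) j :
  cv [:: x] [:: y] 1 -> cv (nseq j x) (nseq j y) j.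
Proof.
move=> H; elim: j => [|j IH]; first exact: cv_refl.
apply: (cv_transl (b := y :: nseq j x) (c1 := 1%N) (c2 := j)).
- exact: (cv_catr (nseq j x) H).
- exact: (cv_catl [:: y] IH).
- lia.
Qed.

Lemma rev_cv {V : finType} {adj : rel V} (e eb : Edge adj) k :
  val eb = ((val e).2, (val e).1) ->
  cv (winv (lpow eb k)) (lpow e k) `|k|%N.
Proof.
move=> Heb; rewrite !lpowE winv_nseq; apply: nseq_cv.
case: (k < 0)%R => /=.
- apply: cv_relator; left; exists eb, e; split => //.
  by rewrite Heb /=; case: (val e).
- apply: cv_relator'; left; exists e, eb; split => //.
Qed.

Lemma linvK {V : finType} {adj : rel V} (x : Edge adj * bool) : linv (linv x) = x.
Proof. by case: x => a b; rewrite /linv /= negbK. Qed.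

Lemma comm_flip_r {V : finType} {adj : rel V} (x y : Edge adj * bool) c :
  cv [:: x; y] [:: y; x] c -> cv [:: x; linv y] [:: linv y; x] c.
Proof.
move=> H.
apply: (cv_transl (b := [:: linv y; y; x; linv y]) (c1 := 0%N) (c2 := c)); last by [].
  apply: cv_free; apply: fe_sym.
  have := fe_ctx [::] [:: x; linv y] (fe_cancel1 (linv y)).
  by rewrite linvK.
apply: (cv_transl (b := [:: linv y; x; y; linv y]) (c1 := c) (c2 := 0%N)); last by rewrite addn0.
  exact: (cv_ctx [:: linv y] [:: linv y] (cv_sym H)).
apply: cv_free.
exact: (fe_ctx [:: linv y; x] [::] (fe_cancel1 y)).
Qed.

Lemma comm_flip_l {V : finType} {adj : rel V} (x y : Edge adj * bool) c :
  cv [:: x; y] [:: y; x] c -> cv [:: linv x; y] [:: y; linv x] c.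
Proof. by move=> H; apply: cv_sym; apply: comm_flip_r; apply: cv_sym. Qed.

Lemma cyc_rot {V : finType} {adj : rel V} (a b c : Edge adj) : cycle3 a b c -> cycle3 b c a.
Proof. by case=> h1 h2 h3; split. Qed.

Lemma tri_base {V : finType} {adj : rel V} (a b c : Edge adj) : cycle3 a b c ->
  forall s, cv [:: (a, s); (b, s)] [:: (c, ~~ s)] 1.
Proof.
move=> H [] /=.
- apply: cv_relator; right; exists a, b, c; split => //; by right.
- apply: cv_relator; right; exists a, b, c; split => //; by left.
Qed.

Lemma tri_base' {V : finType} {adj : rel V} (a b c : Edge adj) : cycle3 a b c ->
  forall s, cv [:: (c, s); (b, s)] [:: (a, ~~ s)] 1.
Proof.
move=> H [] /=.
- apply: cv_relator'; right; exists a, b, c; split => //; by left.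
- apply: cv_relator'; right; exists a, b, c; split => //; by right.
Qed.

Lemma tri_comm {V : finType} {adj : rel V} (a b c : Edge adj) : cycle3 a b c -> commE a b.
Proof.
move=> H.
have B : cv [:: (a, false); (b, false)] [:: (b, false); (a, false)] 2.
  apply: (cv_trans (b := [:: (c, true)]) (c1 := 1%N) (c2 := 1%N)).
    exact: (tri_base H false).
  apply: cv_sym; exact: (tri_base' (cyc_rot (cyc_rot H)) false).
move=> [] [].
- exact: (comm_flip_l (comm_flip_r B)).
- exact: (comm_flip_l B).
- exact: (comm_flip_r B).
- exact: B.
Qed.

Lemma core {V : finType} {adj : rel V} (e f g : Edge adj) (n : int) : cycle3 e f g ->
  cv (lpow g (n + 1)%R ++ lpow e n ++ lpow f (n + 1)%R ++ lpow g n ++ lpow e (n + 1)%R ++ lpow f n) [::]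
     (absz (n + 1)%R * absz n * 2 + absz (n + 1)%R * absz (n + 1)%R + absz n * 2 + absz n * absz n)%N.
Proof.
move=> H.
have Cef := tri_comm H.
have Cfg := tri_comm (cyc_rot H).
have Cge := tri_comm (cyc_rot (cyc_rot H)).
set m := (n + 1)%R.
have S1 : cv (lpow g m ++ lpow e n ++ lpow f m ++ lpow g n ++ lpow e m ++ lpow f n)
             (lpow e n ++ lpow g m ++ lpow f m ++ lpow g n ++ lpow e m ++ lpow f n) (absz m * absz n * 2).
  have h := cv_catr (lpow f m ++ lpow g n ++ lpow e m ++ lpow f n) (swap_lpow m n Cge).
  rewrite -!catA in h; exact: h.
have S2 : cv (lpow e n ++ lpow g m ++ lpow f m ++ lpow g n ++ lpow e m ++ lpow f n)
             (lpow e n ++ winv (lpow e m) ++ lpow g n ++ lpow e m ++ lpow f n) (absz m * absz m).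
  have := pairpow m (tri_base' H) Cef.
  move/(cv_ctx (lpow e n) (lpow g n ++ lpow e m ++ lpow f n)) => h.
  rewrite -!catA in h; exact: h.
have F1 : freely_eq (lpow e n ++ winv (lpow e m)) [:: (e, true)].
  apply: (@fe_trans _ _ _ (lpow e n ++ winv (lpow e n) ++ [:: (e, true)])).
    apply: fe_cat; first exact: fe_refl.
    by have := fe_winv (lpowS e n); rewrite -cat1s winv_cat.
  by have := fe_ctx [::] [:: (e, true)] (fe_cancel (lpow e n)); rewrite /= -catA.
have F2 : freely_eq ([:: (e, true)] ++ lpow e m) (lpow e n).
  apply: (@fe_trans _ _ _ ([:: (e, true)] ++ (e, false) :: lpow e n)).
    apply: fe_cat; [exact: fe_refl| exact: lpowS].
  exact: (fe_ctx [::] (lpow e n) (fe_cancel1 (e, true))).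
have S3 : cv (lpow e n ++ winv (lpow e m) ++ lpow g n ++ lpow e m ++ lpow f n)
             ([:: (e, true)] ++ lpow g n ++ lpow e m ++ lpow f n) 0.
  apply: cv_free; rewrite catA; apply: fe_cat; [exact: F1| exact: fe_refl].
have S4 : cv ([:: (e, true)] ++ lpow g n ++ lpow e m ++ lpow f n)
             (lpow g n ++ [:: (e, true)] ++ lpow e m ++ lpow f n) (absz n * 2).
  have := cv_catr (lpow e m ++ lpow f n) (swap_lpow (-1)%R n (commE_sym Cge)).
  rewrite /= mul1n -!catA => h; exact: h.
have S5 : cv (lpow g n ++ [:: (e, true)] ++ lpow e m ++ lpow f n)
             (lpow g n ++ lpow e n ++ lpow f n) 0.
  apply: cv_free; apply: fe_cat; first exact: fe_refl.
  rewrite catA; apply: fe_cat; [exact: F2| exact: fe_refl].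
have S6 : cv (lpow g n ++ lpow e n ++ lpow f n) (winv (lpow f n) ++ lpow f n) (absz n * absz n).
  rewrite catA; apply: cv_catr; exact: (pairpow n (tri_base (cyc_rot (cyc_rot H))) (commE_sym Cef)).
have S7 : cv (winv (lpow f n) ++ lpow f n) [::] 0.
  apply: cv_free; exact: fe_cancel'.
apply: cv_mono (cv_trans S1 (cv_trans S2 (cv_trans S3 (cv_trans S4 (cv_trans S5 (cv_trans S6 S7)))))) _.
lia.
Qed.

Lemma junction {V : finType} {adj : rel V} (e eb : Edge adj) (A B : word adj) k mm :
  val eb = ((val e).2, (val e).1) -> area_rep (A ++ lpow eb k ++ B) mm ->
  cv (B ++ A) (lpow e k) (mm + `|k|).
Proof.
move=> Heb X.
set E := lpow eb k.
have S0 : cv (B ++ A) (B ++ (A ++ E ++ B) ++ winv B ++ winv E) 0.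
  apply: cv_free; apply: fe_sym.
  apply: (@fe_trans _ _ _ ((B ++ A ++ E) ++ winv E)).
    have := fe_ctx (B ++ A ++ E) (winv E) (fe_cancel B).
    by rewrite /= -!catA.
  have := fe_ctx (B ++ A) [::] (fe_cancel E).
  by rewrite /= !cats0 -!catA.
have S1 : cv (B ++ (A ++ E ++ B) ++ winv B ++ winv E) (B ++ [::] ++ winv B ++ winv E) mm.
  exact: cv_ctx (area_cv X).
have S2 : cv (B ++ [::] ++ winv B ++ winv E) (winv E) 0.
  apply: cv_free; have := fe_ctx [::] (winv E) (fe_cancel B).
  by rewrite /= -!catA.
have S3 := rev_cv k Heb.
exact: (cv_trans S0 (cv_trans S1 (cv_trans S2 S3))).
Qed.

Definition redge {V : finType} {adj : rel V} (adj_sym : forall u v : V, adj u v = adj v u)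
  (e : Edge adj) : Edge adj :=
  exist (fun p : V * V => adj p.1 p.2) ((val e).2, (val e).1)
    (eq_ind _ (fun b => b = true) (valP e) _ (adj_sym _ _)).

Lemma redge_val {V : finType} {adj : rel V} (adj_sym : forall u v : V, adj u v = adj v u)
  (e : Edge adj) : val (redge adj_sym e) = ((val e).2, (val e).1).
Proof. by []. Qed.

From mathcomp Require Import lra.
Unset Implicit Arguments.
Local Open Scope ring_scope.

Theorem lemma4p8 (R : realFieldType) (V : finType) (adj : rel V)
  (adj_sym : forall u v : V, adj u v = adj v u) (adj_irr : irreflexive adj)
  (hsc : simply_connected adj)
  (q : V) (T : rel V) (hT : spanning_tree adj T)
  (gp : V -> V -> seq (Edge adj)) (hgp : tree_geodesics T gp)
  (K : R)
  (hK : forall (e : Edge adj) (n : int),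
      Area_le (pn_of (gp q (iota_e e)) n ++ lpow e n ++ pn_of (gp (tau_e e) q) n)
              (K * ((absz n)%:R) ^+ 2))
  (e f g : Edge adj) (hefg : cycle3 e f g) :
  forall n : int,
    Area_le (Phi gp q n [:: (e, true); (f, true); (g, true)])
      ((3%:R * K + 4%:R) * ((absz n)%:R) ^+ 2
       + (6%:R * (Tdiam gp)%:R + 6%:R) * (absz n)%:R + 5%:R).
Proof.
move=> n.
set N := absz n. set L := Tdiam gp.
have HL : (1 <= L)%N.
  apply: (leq_trans _ (leq_bigmax (iota_e e))).
  apply: (leq_trans _ (leq_bigmax (tau_e e))).
  case: (hgp (iota_e e) (tau_e e)) => /andP [Hc _] _.
  move: Hc; case: (gp (iota_e e) (tau_e e)) => //= /eqP Heq.
  have := valP e; rewrite -/(iota_e e) -/(tau_e e) -Heq.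
  by rewrite adj_irr.
set m := (n + 1)%R.
case: hefg => Hef Hfg Hge.
pose eb := redge adj_sym e. pose fb := redge adj_sym f. pose gb := redge adj_sym g.
have [mE [XE HE]] := hK eb n.
have [mF [XF HF]] := hK fb n.
have [mG [XG HG]] := hK gb n.
have i1 : iota_e eb = tau_e e by []. have t1 : tau_e eb = iota_e e by [].
have i2 : iota_e fb = tau_e f by []. have t2 : tau_e fb = iota_e f by [].
have i3 : iota_e gb = tau_e g by []. have t3 : tau_e gb = iota_e g by [].
rewrite i1 t1 in XE. rewrite i2 t2 in XF. rewrite i3 t3 in XG.
have J1 := junction (redge_val adj_sym e) XE.
have J2 := junction (redge_val adj_sym g) XG.
have J3 := junction (redge_val adj_sym f) XF.
rewrite Hef in J1. rewrite Hge in J2. rewrite Hfg in J3.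
set u := iota_e e in J1 J2 *. set v := iota_e f in J1 J3 *. set w := iota_e g in J2 J3 *.
set P := fun x y => pn_of (gp x y) n.
have EW : Phi gp q n [:: (e, true); (f, true); (g, true)] =
   winv (P q w ++ lpow g m ++ P u q ++ P q v ++ lpow f m ++ P w q
         ++ P q u ++ lpow e m ++ P v q).
  rewrite /Phi /Phi_letter /= cats0 /Phi_edge Hge Hef Hfg.
  by rewrite !winv_cat -!catA.
rewrite EW.
set G := lpow g m. set F := lpow f m. set E := lpow e m.
have S1 : cv (P q w ++ G ++ P u q ++ P q v ++ F ++ P w q ++ P q u ++ E ++ P v q)
             (P q w ++ G ++ lpow e n ++ F ++ P w q ++ P q u ++ E ++ P v q) (mE + N).
  have h := cv_ctx (P q w ++ G) (F ++ P w q ++ P q u ++ E ++ P v q) J1.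
  rewrite -!catA in h; exact: h.
have S2 : cv (P q w ++ G ++ lpow e n ++ F ++ P w q ++ P q u ++ E ++ P v q)
             (P q w ++ G ++ lpow e n ++ F ++ lpow g n ++ E ++ P v q) (mG + N).
  have h := cv_ctx (P q w ++ G ++ lpow e n ++ F) (E ++ P v q) J2.
  rewrite -!catA in h; exact: h.
have S3 : cv (P q w ++ G ++ lpow e n ++ F ++ lpow g n ++ E ++ P v q)
             (P q w ++ (G ++ lpow e n ++ F ++ lpow g n ++ E) ++ (P v q ++ P q w) ++ winv (P q w)) 0.
  apply: cv_free; apply: fe_sym.
  have h := fe_ctx (P q w ++ G ++ lpow e n ++ F ++ lpow g n ++ E ++ P v q) [::] (fe_cancel (P q w)).
  rewrite !cats0 -!catA in h; rewrite -!catA; exact: h.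
have S4 : cv (P q w ++ (G ++ lpow e n ++ F ++ lpow g n ++ E) ++ (P v q ++ P q w) ++ winv (P q w))
             (P q w ++ (G ++ lpow e n ++ F ++ lpow g n ++ E ++ lpow f n) ++ winv (P q w)) (mF + N).
  have h := cv_ctx (P q w ++ (G ++ lpow e n ++ F ++ lpow g n ++ E)) (winv (P q w)) J3.
  rewrite -!catA in h; rewrite -!catA; exact: h.
have S5 : cv (P q w ++ (G ++ lpow e n ++ F ++ lpow g n ++ E ++ lpow f n) ++ winv (P q w))
             (P q w ++ [::] ++ winv (P q w)) (absz m * N * 2 + absz m * absz m + N * 2 + N * N)%N.
  exact: (cv_ctx (P q w) (winv (P q w)) (core n (And3 Hef Hfg Hge))).
have S6 : cv (P q w ++ [::] ++ winv (P q w)) [::] 0.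
  apply: cv_free; exact: fe_cancel.
have [mm [Hmm A]] := cv_area (cv_trans S1 (cv_trans S2 (cv_trans S3 (cv_trans S4 (cv_trans S5 S6))))).
exists mm; split; first exact: area_inv.
have hM : (absz m <= N + 1)%N by rewrite /m /N; lia.
have h1 : (absz m * N <= (N + 1) * N)%N by rewrite leq_mul2r hM orbT.
have h2 : (absz m * absz m <= (N + 1) * (N + 1))%N by apply: leq_mul.
have h3 : (L * N >= N)%N by rewrite -{1}(mul1n N) leq_mul2r HL orbT.
have Hnat : (mm <= mE + mF + mG + (4 * (N * N) + 6 * (L * N) + 6 * N + 5))%N by lia.
have Hr : (mm%:R <= (mE + mF + mG + (4 * (N * N) + 6 * (L * N) + 6 * N + 5))%N%:R :> R).
  by rewrite ler_nat.
rewrite !natrD !natrM in Hr.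
apply: (le_trans Hr).
have -> : (N%:R ^+ 2 : R) = N%:R * N%:R by rewrite expr2.
rewrite expr2 in HE HF HG.
lra.
Qed.
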